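(* Consider the qubit generator families $$\mathcal L^{(1)}_t[\rho]=\gamma_1(t)\,(\sigma_x\rho\sigma_x-\rho),\qquad \mathcal L^{(2)}_t[\rho]=\gamma_2(t)\Big(\sigma_-\rho\sigma_+-\tfrac12\{\sigma_+\sigma_-,\rho\}\Big),$$ with $\sigma_\pm=(\sigma_x\pm\mathrm i\sigma_y)/2$. (a) If $\gamma_1(t)=\sin(2t)$ and $\gamma_2(t)=1$, then each of $\mathcal L^{(1)}$, $\mathcal L^{(2)}$ individually generates SSC dynamics consisting of CPTP maps for all $t\ge0$, but the family $\Lambda_t$ solving $\dot\Lambda_t=(\mathcal L^{(1)}_t+\mathcal L^{(2)}_t)\circ\Lambda_t$, $\Lambda_0=\mathrm{id}$, contains a map that is not completely positive (in particular $\Lambda_\pi$ is not completely positive). (b) If $\gamma_1(t)=1/2$ and $\gamma_2(t)=\sin t$, then again each of $\mathcal L^{(1)}$, $\mathcal L^{(2)}$ individually generates SSC dynamics consisting of CPTP maps for all $t\ge0$, but the map $\Lambda_{2\pi}$ generated by $\mathcal L^{(1)}_t+\mathcal L^{(2)}_t$ is not completely positive.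
   Context: $\sigma_x,\sigma_y,\sigma_z$ are the Pauli matrices. A family of generators $\mathcal L_t$ generates the maps $\Lambda_t$ solving $\dot\Lambda_t=\mathcal L_t\circ\Lambda_t$ with $\Lambda_0$ the identity. For a commutative family ($[\mathcal L_s,\mathcal L_t]=0$) one has $\Lambda_t=\exp(\mathcal Z_t)$ with $\mathcal Z_t=\int_0^t\mathcal L_\tau d\tau$; the dynamics is SSC (semigroup-simulable and commutative) if, in addition, each $\mathcal Z_t$ is of GKSL form, i.e. $\mathcal Z_t[\rho]=-\mathrm i[H,\rho]+\sum_{i,j}\mathsf D_{ij}(F_i\rho F_j^\dagger-\frac12\{F_j^\dagger F_i,\rho\})$ with $\mathsf D\ge0$ in an orthonormal traceless operator basis $\{F_i\}$. *)

(* Defs.v *)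
From Stdlib Require Import Reals.
Open Scope R_scope.

Record C := mkC { Re : R; Im : R }.
Definition C0 : C := mkC 0 0.
Definition C1 : C := mkC 1 0.
Definition Ci : C := mkC 0 1.
Definition RtoC (x : R) : C := mkC x 0.
Definition Cadd (z w : C) : C := mkC (Re z + Re w) (Im z + Im w).
Definition Copp (z : C) : C := mkC (- Re z) (- Im z).
Definition Csub (z w : C) : C := Cadd z (Copp w).
Definition Cmul (z w : C) : C :=
  mkC (Re z * Re w - Im z * Im w) (Re z * Im w + Im z * Re w).
Definition Cconj (z : C) : C := mkC (Re z) (- Im z).

Fixpoint Csum (n : nat) (f : nat -> C) : C :=
  match n with O => C0 | S m => Cadd (Csum m f) (f m) end.
(* sum over a qubit index; false = |0>, true = |1> *)
Definition Bsum (f : bool -> C) : C := Cadd (f false) (f true).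

Definition M2 := bool -> bool -> C.
Definition Madd (A B : M2) : M2 := fun a b => Cadd (A a b) (B a b).
Definition Msub (A B : M2) : M2 := fun a b => Csub (A a b) (B a b).
Definition Mscale (z : C) (A : M2) : M2 := fun a b => Cmul z (A a b).
Definition Mmul (A B : M2) : M2 := fun a b => Bsum (fun c => Cmul (A a c) (B c b)).
Definition Mdag (A : M2) : M2 := fun a b => Cconj (A b a).
Definition Mtr (A : M2) : C := Bsum (fun a => A a a).
Definition Mzero : M2 := fun _ _ => C0.
Definition Mid : M2 := fun a b => if Bool.eqb a b then C1 else C0.
Definition comm (A B : M2) : M2 := Msub (Mmul A B) (Mmul B A).
Definition acomm (A B : M2) : M2 := Madd (Mmul A B) (Mmul B A).

Definition sx : M2 := fun a b => if Bool.eqb a b then C0 else C1.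
Definition sy : M2 := fun a b =>
  match a, b with false, true => Copp Ci | true, false => Ci | _, _ => C0 end.
Definition sz : M2 := fun a b =>
  match a, b with false, false => C1 | true, true => Copp C1 | _, _ => C0 end.
Definition splus : M2 := Mscale (RtoC (/2)) (Madd sx (Mscale Ci sy)).
Definition sminus : M2 := Mscale (RtoC (/2)) (Msub sx (Mscale Ci sy)).

Definition Sop := bool -> bool -> bool -> bool -> C.
Definition apply (S : Sop) (rho : M2) : M2 :=
  fun a b => Bsum (fun c => Bsum (fun d => Cmul (S a b c d) (rho c d))).
Definition Eunit (c d : bool) : M2 :=
  fun a b => if andb (Bool.eqb a c) (Bool.eqb b d) then C1 else C0.
Definition sop_of (f : M2 -> M2) : Sop := fun a b c d => f (Eunit c d) a b.
Definition Scomp (S T : Sop) : Sop :=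
  fun a b c d => Bsum (fun e => Bsum (fun f => Cmul (S a b e f) (T e f c d))).
Definition Sid : Sop := sop_of (fun rho => rho).
Definition Sadd (S T : Sop) : Sop := fun a b c d => Cadd (S a b c d) (T a b c d).

(* an operator on C^n (x) C^2, given as an n x n array of 2x2 blocks X i j *)
Definition blockPSD (n : nat) (X : nat -> nat -> M2) : Prop :=
  forall v : nat -> bool -> C,
    let q := Csum n (fun i => Csum n (fun j => Bsum (fun a => Bsum (fun b =>
               Cmul (Cconj (v i a)) (Cmul (X i j a b) (v j b)))))) in
    Im q = 0 /\ 0 <= Re q.
(* completely positive: id_n (x) S is positive for every n *)
Definition CP (S : Sop) : Prop :=
  forall (n : nat) (X : nat -> nat -> M2),
    blockPSD n X -> blockPSD n (fun i j => apply S (X i j)).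
Definition TP (S : Sop) : Prop := forall rho : M2, Mtr (apply S rho) = Mtr rho.
Definition CPTP (S : Sop) : Prop := CP S /\ TP S.

Definition Cderiv (f : R -> C) (t : R) (z : C) : Prop :=
  derivable_pt_lim (fun s => Re (f s)) t (Re z) /\
  derivable_pt_lim (fun s => Im (f s)) t (Im z).
Definition Cintegral (f : R -> C) (a b : R) (z : C) : Prop :=
  (exists pr : Riemann_integrable (fun s => Re (f s)) a b, RiemannInt pr = Re z) /\
  (exists pr : Riemann_integrable (fun s => Im (f s)) a b, RiemannInt pr = Im z).

Definition solves (L : R -> Sop) (Lam : R -> Sop) : Prop :=
  (forall a b c d, Lam 0 a b c d = Sid a b c d) /\
  (forall t a b c d, Cderiv (fun s => Lam s a b c d) t (Scomp (L t) (Lam t) a b c d)).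

Definition hermitian (H : M2) : Prop := forall a b, H a b = Cconj (H b a).
Definition Kdelta (i j : nat) : C := if Nat.eqb i j then C1 else C0.
Definition GKSL (Z : Sop) : Prop :=
  exists (H : M2) (F : nat -> M2) (D : nat -> nat -> C),
    hermitian H /\
    (forall i, (i < 3)%nat -> Mtr (F i) = C0) /\
    (forall i j, (i < 3)%nat -> (j < 3)%nat -> Mtr (Mmul (Mdag (F i)) (F j)) = Kdelta i j) /\
    (forall v : nat -> C,
       let q := Csum 3 (fun i => Csum 3 (fun j =>
                  Cmul (Cconj (v i)) (Cmul (D i j) (v j)))) in
       Im q = 0 /\ 0 <= Re q) /\
    (forall rho : M2,
       apply Z rho =
       Madd (Mscale (Copp Ci) (comm H rho))
         (fun a b => Csum 3 (fun i => Csum 3 (fun j =>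
            Mscale (D i j)
              (Msub (Mmul (Mmul (F i) rho) (Mdag (F j)))
                    (Mscale (RtoC (/2)) (acomm (Mmul (Mdag (F j)) (F i)) rho))) a b)))).

Definition SSC (L : R -> Sop) : Prop :=
  (forall s t, 0 <= s -> 0 <= t -> forall a b c d,
      Scomp (L s) (L t) a b c d = Scomp (L t) (L s) a b c d) /\
  (forall t, 0 <= t -> exists Z : Sop,
      (forall a b c d, Cintegral (fun tau => L tau a b c d) 0 t (Z a b c d)) /\
      GKSL Z).

Definition SSC_CPTP (L : R -> Sop) : Prop :=
  SSC L /\ (exists Lam, solves L Lam) /\
  (forall Lam, solves L Lam -> forall t, 0 <= t -> CPTP (Lam t)).

Definition L1 (g : R -> R) (t : R) : Sop :=
  sop_of (fun rho => Mscale (RtoC (g t)) (Msub (Mmul (Mmul sx rho) sx) rho)).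
Definition L2 (g : R -> R) (t : R) : Sop :=
  sop_of (fun rho => Mscale (RtoC (g t))
    (Msub (Mmul (Mmul sminus rho) splus)
          (Mscale (RtoC (/2)) (acomm (Mmul splus sminus) rho)))).
Definition Lsum (L L' : R -> Sop) (t : R) : Sop := Sadd (L t) (L' t).

(* Main.v *)
Require Import Defs.
From Stdlib Require Import Reals Lra Lia.
From Coquelicot Require Import Rcomplements Rbar Hierarchy Derive RInt RInt_analysis Continuity AutoDerive.
From Stdlib Require Import FunctionalExtensionality.
Require Import Defs.
Open Scope R_scope.

Lemma Cext z w : Re z = Re w -> Im z = Im w -> z = w.
Proof. destruct z, w; simpl; intros; subst; reflexivity. Qed.
Ltac unf := unfold L1, L2, Lsum, sop_of, Mscale, Msub, Madd, Mmul, Mdag, Mtr, Bsum, Eunit, sx, sy, sz, splus, sminus, acomm, comm, Cmul, Cadd, Csub, Copp, Cconj, RtoC, C0, C1, Ci, Scomp, Sid, Sadd, apply, Mid, Mzero in *.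
Definition bR (b : bool) : R := if b then 1 else 0.
Lemma sminus_tab : sminus = fun a b => RtoC (bR (a && negb b)).
Proof. apply functional_extensionality; intro a; apply functional_extensionality; intro b.
destruct a, b; unf; simpl; apply Cext; simpl; lra. Qed.
Lemma splus_tab : splus = fun a b => RtoC (bR (negb a && b)).
Proof. apply functional_extensionality; intro a; apply functional_extensionality; intro b.
destruct a, b; unf; simpl; apply Cext; simpl; lra. Qed.

Definition Rtab := bool -> bool -> bool -> bool -> R.
Definition k1 : Rtab := fun a b c d =>
  bR (Bool.eqb a (negb c) && Bool.eqb b (negb d)) - bR (Bool.eqb a c && Bool.eqb b d).
Definition k2 : Rtab := fun a b c d =>
  match a, b, c, d with
  | false, false, false, false => -1
  | true, true, false, false => 1
  | false, true, false, true => - / 2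
  | true, false, true, false => - / 2
  | _, _, _, _ => 0 end.
Definition toS (T : Rtab) : Sop := fun a b c d => RtoC (T a b c d).
Definition dtab : Rtab := fun a b c d => bR (Bool.eqb a c && Bool.eqb b d).

Lemma L2_pt g t a b c d : L2 g t a b c d = RtoC (g t * k2 a b c d).
Proof. unfold L2; rewrite sminus_tab, splus_tab.
destruct a,b,c,d; unfold k2, bR; unf; simpl; apply Cext; simpl; lra. Qed.
Lemma L1_pt g t a b c d : L1 g t a b c d = RtoC (g t * k1 a b c d).
Proof. destruct a,b,c,d; unfold k1, bR; unf; simpl; apply Cext; simpl; lra. Qed.
Lemma Sid_pt a b c d : Sid a b c d = RtoC (dtab a b c d).
Proof. destruct a,b,c,d; unfold dtab, bR; unf; simpl; apply Cext; simpl; lra. Qed.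

Lemma fext4 (A B : Sop) : (forall a b c d, A a b c d = B a b c d) -> A = B.
Proof. intro H. do 4 (apply functional_extensionality; intro). apply H. Qed.
Lemma L1_fun g : L1 g = fun t a b c d => RtoC (g t * k1 a b c d).
Proof. apply functional_extensionality; intro t. apply fext4. apply L1_pt. Qed.
Lemma L2_fun g : L2 g = fun t a b c d => RtoC (g t * k2 a b c d).
Proof. apply functional_extensionality; intro t. apply fext4. apply L2_pt. Qed.
Lemma Sid_fun : Sid = toS dtab.
Proof. apply fext4. apply Sid_pt. Qed.

Definition S4 (f : bool -> bool -> R) : R := f false false + f false true + f true false + f true true.
Definition Rcomp (A B : Rtab) : Rtab := fun a b c d => S4 (fun e f => A a b e f * B e f c d).

Lemma mvt_lim (f f' : R -> R) a b :
  (forall x, derivable_pt_lim f x (f' x)) -> a < b ->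
  exists c, a < c < b /\ f b - f a = f' c * (b - a).
Proof. intros H Hab.
  set (pr := fun x => exist (fun l => derivable_pt_lim f x l) (f' x) (H x) : derivable_pt f x).
  destruct (MVT_cor1 f a b pr Hab) as [c [Hc1 Hc2]]. exists c. split; auto. Qed.
Lemma const_lim (f : R -> R) : (forall x, derivable_pt_lim f x 0) -> forall t, f t = f 0.
Proof. intros H t. destruct (Rtotal_order 0 t) as [h|[h|h]].
- destruct (mvt_lim f (fun _ => 0) 0 t H h) as [c [_ Hc]]. lra.
- subst; reflexivity.
- destruct (mvt_lim f (fun _ => 0) t 0 H h) as [c [_ Hc]]. lra. Qed.
Lemma decr_lim (f f' : R -> R) a b : (forall x, derivable_pt_lim f x (f' x)) ->
  (forall x, a <= x <= b -> f' x <= 0) -> a <= b -> f b <= f a.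
Proof. intros H Hn Hab. destruct (Req_dec a b) as [->|hne]. lra.
  destruct (mvt_lim f f' a b H) as [c [Hc1 Hc2]]. lra.
  assert (f' c <= 0) by (apply Hn; lra). nra. Qed.
Lemma incr_strict (f f' : R -> R) a b : (forall x, derivable_pt_lim f x (f' x)) ->
  (forall x, a < x < b -> 0 < f' x) -> a < b -> f a < f b.
Proof. intros H Hn Hab.
  destruct (mvt_lim f f' a b H) as [c [Hc1 Hc2]]. auto.
  assert (0 < f' c) by (apply Hn; lra). nra. Qed.
Lemma lim_eq f x l l' : derivable_pt_lim f x l -> l = l' -> derivable_pt_lim f x l'.
Proof. intros H ->; exact H. Qed.
Lemma lim_ext f g x l : (forall y, f y = g y) -> derivable_pt_lim f x l -> derivable_pt_lim g x l.
Proof. intros H. replace g with f; auto. apply functional_extensionality; auto. Qed.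
Lemma Dplus f g x a b : derivable_pt_lim f x a -> derivable_pt_lim g x b ->
  derivable_pt_lim (fun t => f t + g t) x (a + b).
Proof. apply derivable_pt_lim_plus. Qed.
Lemma Dminus f g x a b : derivable_pt_lim f x a -> derivable_pt_lim g x b ->
  derivable_pt_lim (fun t => f t - g t) x (a - b).
Proof. apply derivable_pt_lim_minus. Qed.
Lemma Dmult f g x a b : derivable_pt_lim f x a -> derivable_pt_lim g x b ->
  derivable_pt_lim (fun t => f t * g t) x (a * g x + f x * b).
Proof. intros. eapply lim_eq. apply derivable_pt_lim_mult; eauto. ring. Qed.
Lemma Dconst x c : derivable_pt_lim (fun _ => c) x 0.
Proof. apply derivable_pt_lim_const. Qed.
Lemma Dcomp (F h : R -> R) x a b : derivable_pt_lim h x a -> derivable_pt_lim F (h x) b ->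
  derivable_pt_lim (fun t => F (h t)) x (b * a).
Proof. intros. apply (derivable_pt_lim_comp h F); auto. Qed.
Lemma DS4 (u v : R -> bool -> bool -> R) (u' v' : bool -> bool -> R) x :
  (forall e f, derivable_pt_lim (fun t => u t e f) x (u' e f)) ->
  (forall e f, derivable_pt_lim (fun t => v t e f) x (v' e f)) ->
  derivable_pt_lim (fun t => S4 (fun e f => u t e f * v t e f)) x
    (S4 (fun e f => u' e f * v x e f + u x e f * v' e f)).
Proof. intros Hu Hv. unfold S4.
  repeat apply Dplus; apply Dmult; auto. Qed.

Lemma dtab_sum a b (z : bool -> bool -> R) : S4 (fun e f => dtab a b e f * z e f) = z a b.
Proof. destruct a, b; unfold S4, dtab, bR; simpl; ring. Qed.

Lemma uniq_real (k : Rtab) (ex : R -> Rtab) (g G : R -> R) (y : R -> bool -> bool -> R) :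
  (forall a b c d, ex 0 a b c d = dtab a b c d) ->
  (forall x a b c d, derivable_pt_lim (fun z => ex z a b c d) x (Rcomp (ex x) k a b c d)) ->
  (forall x a b c d, Rcomp (ex x) (ex (-x)) a b c d = dtab a b c d) ->
  (forall t, derivable_pt_lim G t (g t)) -> G 0 = 0 ->
  (forall t a b, derivable_pt_lim (fun s => y s a b) t (g t * S4 (fun e f => k a b e f * y t e f))) ->
  forall t a b, y t a b = S4 (fun e f => ex (G t) a b e f * y 0 e f).
Proof.
  intros Hid Hder Hinv HG HG0 Hy.
  set (w := fun t a b => S4 (fun e f => ex (- G t) a b e f * y t e f)).
  assert (Hw : forall a b t, w t a b = w 0 a b).
  { intros a b. apply (const_lim (fun t => w t a b)). intro x. unfold w.
    eapply lim_eq.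
    - apply (DS4 (fun t e f => ex (- G t) a b e f) y
               (fun e f => Rcomp (ex (- G x)) k a b e f * (- g x))
               (fun e f => g x * S4 (fun e' f' => k e f e' f' * y x e' f'))).
      + intros e f. apply (Dcomp (fun z => ex z a b e f) (fun t => - G t)).
        apply derivable_pt_lim_opp. apply HG. apply Hder.
      + intros e f. apply Hy.
    - unfold S4, Rcomp, S4. ring. }
  assert (Hw0 : forall a b, w 0 a b = y 0 a b).
  { intros a b. unfold w. rewrite HG0, Ropp_0.
    rewrite <- (dtab_sum a b (y 0)). unfold S4. rewrite !Hid. reflexivity. }
  intros t a b.
  rewrite <- (dtab_sum a b (y t)).
  transitivity (S4 (fun e f => Rcomp (ex (G t)) (ex (- G t)) a b e f * y t e f)).
  { unfold S4. rewrite !Hinv. reflexivity. }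
  transitivity (S4 (fun e f => ex (G t) a b e f * w t e f)).
  { unfold w, Rcomp, S4. ring. }
  unfold S4. rewrite !(Hw _ _ t), !Hw0. reflexivity.
Qed.

Lemma dtab_sum_r c d (z : bool -> bool -> R) : S4 (fun e f => z e f * dtab e f c d) = z c d.
Proof. destruct c, d; unfold S4, dtab, bR; simpl; ring. Qed.

Lemma exist_gen (k : Rtab) (ex : R -> Rtab) (g G : R -> R) (L : R -> Sop) :
  L = (fun t a b c d => RtoC (g t * k a b c d)) ->
  (forall a b c d, ex 0 a b c d = dtab a b c d) ->
  (forall x a b c d, derivable_pt_lim (fun z => ex z a b c d) x (Rcomp k (ex x) a b c d)) ->
  (forall t, derivable_pt_lim G t (g t)) -> G 0 = 0 ->
  solves L (fun t => toS (ex (G t))).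
Proof.
  intros -> Hid Hder HG HG0. split.
  - intros a b c d. unfold toS. rewrite HG0, Hid, Sid_pt. reflexivity.
  - intros t a b c d. unfold Cderiv, toS, RtoC. simpl. split.
    + eapply lim_eq. apply (Dcomp (fun z => ex z a b c d) G). apply HG. apply Hder.
      unfold Scomp, Bsum, Cmul, Rcomp, S4. simpl. ring.
    + eapply lim_eq. apply Dconst. unfold Scomp, Bsum, Cmul, Cadd. simpl. ring.
Qed.

Lemma uniq_gen (k : Rtab) (ex : R -> Rtab) (g G : R -> R) (L : R -> Sop) (Lam : R -> Sop) :
  L = (fun t a b c d => RtoC (g t * k a b c d)) ->
  (forall a b c d, ex 0 a b c d = dtab a b c d) ->
  (forall x a b c d, derivable_pt_lim (fun z => ex z a b c d) x (Rcomp (ex x) k a b c d)) ->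
  (forall x a b c d, Rcomp (ex x) (ex (-x)) a b c d = dtab a b c d) ->
  (forall t, derivable_pt_lim G t (g t)) -> G 0 = 0 ->
  solves L Lam ->
  forall t a b c d, Lam t a b c d = RtoC (ex (G t) a b c d).
Proof.
  intros -> Hid Hder Hinv HG HG0 [H0 HD] t a b c d.
  apply Cext; unfold RtoC; simpl.
  - rewrite (uniq_real k ex g G (fun s a b => Re (Lam s a b c d)) Hid Hder Hinv HG HG0).
    + transitivity (S4 (fun e f => ex (G t) a b e f * dtab e f c d)).
      unfold S4. rewrite !H0, !Sid_pt. reflexivity. apply dtab_sum_r.
    + intros s a' b'. eapply lim_eq. apply (proj1 (HD s a' b' c d)).
      unfold Scomp, Bsum, Cmul, Cadd, RtoC, S4. simpl. ring.
  - rewrite (uniq_real k ex g G (fun s a b => Im (Lam s a b c d)) Hid Hder Hinv HG HG0).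
    + unfold S4. rewrite !H0, !Sid_pt. unfold RtoC. simpl. ring.
    + intros s a' b'. eapply lim_eq. apply (proj2 (HD s a' b' c d)).
      unfold Scomp, Bsum, Cmul, Cadd, RtoC, S4. simpl. ring.
Qed.

Lemma Csum_ext n f g : (forall i, f i = g i) -> Csum n f = Csum n g.
Proof. intro H; induction n; simpl; auto. rewrite IHn, H; auto. Qed.
Lemma Csum_add n f g : Csum n (fun i => Cadd (f i) (g i)) = Cadd (Csum n f) (Csum n g).
Proof. induction n; simpl. apply Cext; simpl; ring. rewrite IHn. apply Cext; simpl; ring. Qed.
Lemma Csum_scal n c f : Csum n (fun i => Cmul (RtoC c) (f i)) = Cmul (RtoC c) (Csum n f).
Proof. induction n; simpl. apply Cext; simpl; ring. rewrite IHn. apply Cext; simpl; ring. Qed.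

Definition blk (X : M2) (u u' : bool -> C) : C :=
  Bsum (fun a => Bsum (fun b => Cmul (Cconj (u a)) (Cmul (X a b) (u' b)))).
Definition kw (K : bool -> bool -> R) (u : bool -> C) : bool -> C :=
  fun c => Bsum (fun a => Cmul (RtoC (K a c)) (u a)).

Lemma blk_kraus (K0 K1 : bool -> bool -> R) (c0 c1 : R) (X : M2) (u u' : bool -> C) :
  blk (apply (fun a b c d => RtoC (c0 * K0 a c * K0 b d + c1 * K1 a c * K1 b d)) X) u u' =
  Cadd (Cmul (RtoC c0) (blk X (kw K0 u) (kw K0 u'))) (Cmul (RtoC c1) (blk X (kw K1 u) (kw K1 u'))).
Proof. unfold blk, kw, apply, Bsum, Cmul, Cadd, Cconj, RtoC. apply Cext; simpl; ring. Qed.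

Lemma CP_kraus (S : Sop) (K0 K1 : bool -> bool -> R) (c0 c1 : R) : 0 <= c0 -> 0 <= c1 ->
  (forall a b c d, S a b c d = RtoC (c0 * K0 a c * K0 b d + c1 * K1 a c * K1 b d)) -> CP S.
Proof.
  intros h0 h1 HS. assert (HS' : S = fun a b c d => RtoC (c0 * K0 a c * K0 b d + c1 * K1 a c * K1 b d)).
  { apply fext4; auto. } subst S.
  intros n X HX v. cbv zeta.
  pose proof (HX (fun i => kw K0 (v i))) as H0. pose proof (HX (fun i => kw K1 (v i))) as H1.
  cbv zeta in H0, H1.
  match goal with |- context [Csum n ?F] => set (FF := F) end.
  assert (E : Csum n FF = Cadd (Cmul (RtoC c0) (Csum n (fun i => Csum n (fun j => blk (X i j) (kw K0 (v i)) (kw K0 (v j))))))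
                              (Cmul (RtoC c1) (Csum n (fun i => Csum n (fun j => blk (X i j) (kw K1 (v i)) (kw K1 (v j))))))).
  { rewrite <- !Csum_scal, <- Csum_add. apply Csum_ext; intro i. unfold FF.
    rewrite <- !Csum_scal, <- Csum_add. apply Csum_ext; intro j.
    apply blk_kraus. }
  rewrite E. unfold blk in *. destruct H0 as [Hi0 Hr0]. destruct H1 as [Hi1 Hr1].
  revert Hi0 Hr0 Hi1 Hr1.
  generalize (Csum n (fun i => Csum n (fun j => Bsum (fun a => Bsum (fun b =>
               Cmul (Cconj (kw K0 (v i) a)) (Cmul (X i j a b) (kw K0 (v j) b))))))).
  generalize (Csum n (fun i => Csum n (fun j => Bsum (fun a => Bsum (fun b =>
               Cmul (Cconj (kw K1 (v i) a)) (Cmul (X i j a b) (kw K1 (v j) b))))))).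
  intros z1 z0 Hi0 Hr0 Hi1 Hr1. destruct z0, z1; simpl in *. split. rewrite Hi0, Hi1. ring.
  apply Rplus_le_le_0_compat; rewrite ?Hi0, ?Hi1; nra.
Qed.

Definition xtab : Rtab := fun a b c d => bR (Bool.eqb a (negb c) && Bool.eqb b (negb d)).
Definition p1 (x : R) : R := / 2 * (1 + exp (- (2 * x))).
Definition ex1 (x : R) : Rtab := fun a b c d => p1 x * dtab a b c d + (1 - p1 x) * xtab a b c d.
Definition q2 (x : R) : R := exp (- (x * / 2)).
Definition ex2 (x : R) : Rtab := fun a b c d =>
  match a, b, c, d with
  | false, false, false, false => q2 x * q2 x
  | true, true, false, false => 1 - q2 x * q2 x
  | true, true, true, true => 1
  | false, true, false, true => q2 x
  | true, false, true, false => q2 x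
  | _, _, _, _ => 0 end.

Lemma p1_der x : derivable_pt_lim p1 x (- exp (- (2 * x))).
Proof. unfold p1. apply is_derive_Reals. auto_derive. auto. field. Qed.
Lemma q2_der x : derivable_pt_lim q2 x (- / 2 * q2 x).
Proof. unfold q2. apply is_derive_Reals. auto_derive. auto. field. Qed.
Lemma p1_inv x : exp (- (2 * - x)) = / exp (- (2 * x)).
Proof. rewrite <- exp_Ropp. f_equal. ring. Qed.
Lemma q2_inv x : q2 (- x) = / q2 x.
Proof. unfold q2. rewrite <- exp_Ropp. f_equal. ring. Qed.

Lemma ex1_0 a b c d : ex1 0 a b c d = dtab a b c d.
Proof. unfold ex1, p1. replace (- (2 * 0)) with 0 by ring. rewrite exp_0.
  destruct a,b,c,d; unfold dtab, xtab, bR; simpl; field. Qed.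
Lemma ex2_0 a b c d : ex2 0 a b c d = dtab a b c d.
Proof. unfold ex2, q2. replace (- (0 * / 2)) with 0 by ring. rewrite exp_0.
  destruct a,b,c,d; unfold dtab, bR; simpl; ring. Qed.

Lemma ex1_der_raw x a b c d : derivable_pt_lim (fun z => ex1 z a b c d) x
   (- exp (- (2 * x)) * dtab a b c d + exp (- (2 * x)) * xtab a b c d).
Proof. unfold ex1. eapply lim_eq.
  apply Dplus. apply Dmult. apply p1_der. apply Dconst. apply Dmult. apply Dminus. apply Dconst. apply p1_der. apply Dconst.
  cbv beta; ring. Qed.
Lemma ex1_derK x a b c d : derivable_pt_lim (fun z => ex1 z a b c d) x (Rcomp k1 (ex1 x) a b c d).
Proof. eapply lim_eq. apply ex1_der_raw. unfold Rcomp, S4, k1, ex1, p1.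
  destruct a,b,c,d; unfold dtab, xtab, bR; simpl; field. Qed.
Lemma ex1_derE x a b c d : derivable_pt_lim (fun z => ex1 z a b c d) x (Rcomp (ex1 x) k1 a b c d).
Proof. eapply lim_eq. apply ex1_der_raw. unfold Rcomp, S4, k1, ex1, p1.
  destruct a,b,c,d; unfold dtab, xtab, bR; simpl; field. Qed.
Lemma ex1_inv x a b c d : Rcomp (ex1 x) (ex1 (- x)) a b c d = dtab a b c d.
Proof. unfold Rcomp, S4, ex1, p1. rewrite p1_inv. assert (h := exp_pos (- (2 * x))).
  destruct a,b,c,d; unfold dtab, xtab, bR; simpl; field; lra. Qed.

Lemma ex2_derK x a b c d : derivable_pt_lim (fun z => ex2 z a b c d) x (Rcomp k2 (ex2 x) a b c d).
Proof. unfold Rcomp, S4, k2, ex2.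
  destruct a,b,c,d; simpl; eapply lim_eq;
  first [ apply Dconst | apply q2_der | apply (Dmult q2 q2); apply q2_der
        | apply Dminus; [apply Dconst | apply (Dmult q2 q2); apply q2_der] | idtac ]; field. Qed.
Lemma ex2_derE x a b c d : derivable_pt_lim (fun z => ex2 z a b c d) x (Rcomp (ex2 x) k2 a b c d).
Proof. unfold Rcomp, S4, k2, ex2.
  destruct a,b,c,d; simpl; eapply lim_eq;
  first [ apply Dconst | apply q2_der | apply (Dmult q2 q2); apply q2_der
        | apply Dminus; [apply Dconst | apply (Dmult q2 q2); apply q2_der] | idtac ]; field. Qed.
Lemma ex2_inv x a b c d : Rcomp (ex2 x) (ex2 (- x)) a b c d = dtab a b c d.
Proof. unfold Rcomp, S4, ex2. rewrite q2_inv. assert (h := exp_pos (- (x * / 2))). fold (q2 x) in h.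
  destruct a,b,c,d; unfold dtab, bR; simpl; field; lra. Qed.

Lemma exp_le1 u : u <= 0 -> exp u <= 1.
Proof. intro h. destruct (Req_dec u 0) as [->|hn]. rewrite exp_0; lra.
  rewrite <- exp_0. left. apply exp_increasing. lra. Qed.

Lemma ex1_CP x : 0 <= x -> CP (toS (ex1 x)).
Proof. intro hx. assert (h1 : exp (- (2 * x)) <= 1) by (apply exp_le1; lra).
  assert (h2 := exp_pos (- (2 * x))).
  apply (CP_kraus _ (fun a c => bR (Bool.eqb a c)) (fun a c => bR (Bool.eqb a (negb c))) (p1 x) (1 - p1 x)).
  unfold p1; lra. unfold p1; lra.
  intros a b c d; unfold toS, ex1; destruct a,b,c,d; unfold dtab, xtab, bR; simpl; f_equal; ring. Qed.
Lemma ex2_CP x : 0 <= x -> CP (toS (ex2 x)).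
Proof. intro hx. assert (h1 : q2 x <= 1) by (apply exp_le1; lra).
  assert (h2 := exp_pos (- (x * / 2))). fold (q2 x) in h2.
  apply (CP_kraus _ (fun a c => if a then (if c then 1 else 0) else (if c then 0 else q2 x))
                    (fun a c => bR (a && negb c)) 1 (1 - q2 x * q2 x)).
  lra. nra.
  intros a b c d; unfold toS, ex2; destruct a,b,c,d; unfold bR; simpl; f_equal; ring. Qed.
Lemma ex1_TP x : TP (toS (ex1 x)).
Proof. intro rho. unfold toS, ex1, dtab, xtab, bR. unf. simpl. apply Cext; simpl; ring. Qed.
Lemma ex2_TP x : TP (toS (ex2 x)).
Proof. intro rho. unfold toS, ex2. unf. simpl. apply Cext; simpl; ring. Qed.

Definition F3 (i : nat) : M2 :=
  match i with
  | 0%nat => Eunit false true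
  | 1%nat => Eunit true false
  | _ => fun a b => if Bool.eqb a b then (if a then mkC (- / 2) (- / 2) else mkC (/ 2) (/ 2)) else C0
  end.
Definition D1 (G : R) (i j : nat) : C := if (Nat.ltb i 2 && Nat.ltb j 2)%bool then RtoC G else C0.
Definition D2 (G : R) (i j : nat) : C := if (Nat.eqb i 1 && Nat.eqb j 1)%bool then RtoC G else C0.

Lemma F3_tr i : (i < 3)%nat -> Mtr (F3 i) = C0.
Proof. intro h. destruct i as [|[|[|]]]; try lia; unf; simpl; apply Cext; simpl; field. Qed.
Lemma F3_on i j : (i < 3)%nat -> (j < 3)%nat -> Mtr (Mmul (Mdag (F3 i)) (F3 j)) = Kdelta i j.
Proof. intros hi hj. destruct i as [|[|[|]]]; try lia; destruct j as [|[|[|]]]; try lia;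
  unfold Kdelta; unf; simpl; apply Cext; simpl; field. Qed.
Lemma herm0 : hermitian Mzero.
Proof. intros a b. unf. apply Cext; simpl; ring. Qed.

Lemma MscaleC0 X a b : Mscale C0 X a b = C0.
Proof. unf. apply Cext; simpl; ring. Qed.
Lemma Cadd_C0l z : Cadd C0 z = z.
Proof. unf. apply Cext; simpl; ring. Qed.
Lemma Cadd_C0r z : Cadd z C0 = z.
Proof. unf. apply Cext; simpl; ring. Qed.

Lemma GKSL1 G : 0 <= G -> GKSL (toS (fun a b c d => G * k1 a b c d)).
Proof. intro hG. exists Mzero, F3, (D1 G). split. apply herm0. split. apply F3_tr. split. apply F3_on. split.
  - intro v. cbv zeta. unfold D1. simpl. unf. simpl. split. ring.
    match goal with |- 0 <= ?e => replace e with (G * ((Re (v 0%nat) + Re (v 1%nat))^2 + (Im (v 0%nat) + Im (v 1%nat))^2)) by ring end.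
    apply Rmult_le_pos; auto. apply Rplus_le_le_0_compat; apply pow2_ge_0.
  - intro rho. apply functional_extensionality; intro a; apply functional_extensionality; intro b.
    cbn [Csum D1 Nat.ltb Nat.leb andb]. unfold Madd at 1. cbv beta. rewrite ?MscaleC0, ?Cadd_C0l, ?Cadd_C0r.
    unfold toS, F3, k1, bR. destruct a, b. all: cbv [L1 L2 Lsum sop_of Mscale Msub Madd Mmul Mdag Mtr Bsum Eunit sx sy sz splus sminus acomm comm Cmul Cadd Csub Copp Cconj RtoC C0 C1 Ci Scomp Sid Sadd apply Mid Mzero Bool.eqb andb negb Re Im]. all: apply Cext. all: cbn [Re Im]. all: field.
Qed.
Ltac cv := cbv [L1 L2 Lsum sop_of Mscale Msub Madd Mmul Mdag Mtr Bsum Eunit sx sy sz splus sminus acomm comm Cmul Cadd Csub Copp Cconj RtoC C0 C1 Ci Scomp Sid Sadd apply Mid Mzero Bool.eqb andb negb Re Im].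

Lemma GKSL2 G : 0 <= G -> GKSL (toS (fun a b c d => G * k2 a b c d)).
Proof. intro hG. exists Mzero, F3, (D2 G). split. apply herm0. split. apply F3_tr. split. apply F3_on. split.
  - intro v. cbv zeta. unfold D2. simpl. unf. simpl. split. ring.
    match goal with |- 0 <= ?e => replace e with (G * ((Re (v 1%nat))^2 + (Im (v 1%nat))^2)) by ring end.
    apply Rmult_le_pos; auto. apply Rplus_le_le_0_compat; apply pow2_ge_0.
  - intro rho. apply functional_extensionality; intro a; apply functional_extensionality; intro b.
    cbn [Csum D2 Nat.eqb andb]. unfold Madd at 1. cbv beta. rewrite ?MscaleC0, ?Cadd_C0l, ?Cadd_C0r.
    unfold toS, F3, k2. destruct a, b. all: cv. all: apply Cext. all: cbn [Re Im]. all: field.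
Qed.

Lemma integ (f F : R -> R) t : (forall x, derivable_pt_lim F x (f x)) -> (forall x, continuity_pt f x) ->
  exists pr : Riemann_integrable f 0 t, RiemannInt pr = F t - F 0.
Proof. intros HF Hc.
  assert (H : is_RInt f 0 t (minus (F t) (F 0))).
  { apply (@is_RInt_derive R_CompleteNormedModule F f). intros x _. apply is_derive_Reals. apply HF.
    intros x _. apply continuity_pt_filterlim. apply Hc. }
  assert (Hex : ex_RInt f 0 t) by (eexists; eauto).
  exists (ex_RInt_Reals_0 f 0 t Hex). rewrite <- RInt_Reals.
  rewrite (is_RInt_unique _ _ _ _ H). unfold minus, plus, opp; simpl. ring. Qed.

Lemma SSC_gen (k : Rtab) (L : R -> Sop) (g G : R -> R) :
  L = (fun t a b c d => RtoC (g t * k a b c d)) ->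
  (forall x, derivable_pt_lim G x (g x)) -> (forall x, continuity_pt g x) -> G 0 = 0 ->
  (forall t, 0 <= t -> GKSL (toS (fun a b c d => G t * k a b c d))) -> SSC L.
Proof.
  intros -> HG Hc HG0 HK. split.
  - intros s t _ _ a b c d. unfold Scomp, Bsum, Cmul, Cadd, RtoC. apply Cext; simpl; ring.
  - intros t ht. exists (toS (fun a b c d => G t * k a b c d)). split; [|apply HK; auto].
    intros a b c d. split.
    + destruct (integ (fun s => g s * k a b c d) (fun s => G s * k a b c d) t) as [pr Hpr].
      * intro x. eapply lim_eq. apply Dmult. apply HG. apply Dconst. cbv beta; ring.
      * intro x. apply continuity_pt_mult. apply Hc. apply continuity_pt_const. intros u v; reflexivity.
      * exists pr. transitivity (G t * k a b c d - G 0 * k a b c d). exact Hpr. unfold toS, RtoC; simpl. rewrite HG0. ring.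
    + destruct (integ (fun s => 0) (fun s => 0) t) as [pr Hpr].
      * intro x. apply Dconst.
      * intro x. apply continuity_pt_const. intros u v; reflexivity.
      * exists pr. transitivity (0 - 0). exact Hpr. unfold toS, RtoC; simpl. ring.
Qed.

Lemma SSC_CPTP_1 (g G : R -> R) : (forall x, derivable_pt_lim G x (g x)) -> (forall x, continuity_pt g x) ->
  G 0 = 0 -> (forall t, 0 <= t -> 0 <= G t) -> SSC_CPTP (L1 g).
Proof. intros HG Hc HG0 Hp. split; [|split].
  - apply (SSC_gen k1 (L1 g) g G (L1_fun g) HG Hc HG0). intros t ht. apply GKSL1. auto.
  - exists (fun t => toS (ex1 (G t))). apply (exist_gen k1 ex1 g G (L1 g) (L1_fun g) ex1_0 ex1_derK HG HG0).
  - intros Lam HL t ht.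
    assert (E : Lam t = toS (ex1 (G t))).
    { apply fext4. intros a b c d. unfold toS. apply (uniq_gen k1 ex1 g G (L1 g) Lam (L1_fun g) ex1_0 ex1_derE ex1_inv HG HG0 HL). }
    rewrite E. split. apply ex1_CP; auto. apply ex1_TP.
Qed.
Lemma SSC_CPTP_2 (g G : R -> R) : (forall x, derivable_pt_lim G x (g x)) -> (forall x, continuity_pt g x) ->
  G 0 = 0 -> (forall t, 0 <= t -> 0 <= G t) -> SSC_CPTP (L2 g).
Proof. intros HG Hc HG0 Hp. split; [|split].
  - apply (SSC_gen k2 (L2 g) g G (L2_fun g) HG Hc HG0). intros t ht. apply GKSL2. auto.
  - exists (fun t => toS (ex2 (G t))). apply (exist_gen k2 ex2 g G (L2 g) (L2_fun g) ex2_0 ex2_derK HG HG0).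
  - intros Lam HL t ht.
    assert (E : Lam t = toS (ex2 (G t))).
    { apply fext4. intros a b c d. unfold toS. apply (uniq_gen k2 ex2 g G (L2 g) Lam (L2_fun g) ex2_0 ex2_derE ex2_inv HG HG0 HL). }
    rewrite E. split. apply ex2_CP; auto. apply ex2_TP.
Qed.

Definition Af (G1 G2 : R -> R) t := 2 * G1 t + G2 t.
Definition mf G1 G2 t := / exp (Af G1 G2 t).
Definition If g1 G1 G2 t := RInt (fun s => g1 s * exp (Af G1 G2 s)) 0 t.
Definition zf g1 G1 G2 t := mf G1 G2 t * If g1 G1 G2 t.
Definition eBf (G2 : R -> R) t := exp (- (G2 t * / 2)).
Definition eDf (G1 G2 : R -> R) t := exp (- (2 * G1 t + G2 t * / 2)).

Definition sumtab g1 G1 G2 t : Rtab := fun a b c d =>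
  match a, b, c, d with
  | false, false, false, false => mf G1 G2 t + zf g1 G1 G2 t
  | true, true, false, false => 1 - (mf G1 G2 t + zf g1 G1 G2 t)
  | false, false, true, true => zf g1 G1 G2 t
  | true, true, true, true => 1 - zf g1 G1 G2 t
  | false, true, false, true => / 2 * (eBf G2 t + eDf G1 G2 t)
  | true, false, false, true => / 2 * (eBf G2 t - eDf G1 G2 t)
  | false, true, true, false => / 2 * (eBf G2 t - eDf G1 G2 t)
  | true, false, true, false => / 2 * (eBf G2 t + eDf G1 G2 t)
  | _, _, _, _ => 0 end.


Lemma cont_of_der (F f : R -> R) x : (forall y, derivable_pt_lim F y (f y)) -> continuity_pt F x.
Proof. intro H. apply derivable_continuous_pt. exists (f x). apply H. Qed.

Lemma sum_exist (g1 g2 G1 G2 : R -> R) :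
  (forall x, derivable_pt_lim G1 x (g1 x)) -> (forall x, derivable_pt_lim G2 x (g2 x)) ->
  (forall x, continuity_pt g1 x) -> G1 0 = 0 -> G2 0 = 0 ->
  solves (Lsum (L1 g1) (L2 g2)) (fun t => toS (sumtab g1 G1 G2 t)).
Proof.
  intros HG1 HG2 Hc1 HG10 HG20.
  assert (HA : forall x, derivable_pt_lim (Af G1 G2) x (2 * g1 x + g2 x)).
  { intro x. unfold Af. eapply lim_eq. apply Dplus. apply Dmult. apply Dconst. apply HG1. apply HG2. cbv beta; ring. }
  assert (HA0 : Af G1 G2 0 = 0) by (unfold Af; rewrite HG10, HG20; ring).
  assert (Hcf : forall x, continuity_pt (fun s => g1 s * exp (Af G1 G2 s)) x).
  { intro x. apply continuity_pt_mult. apply Hc1. apply (continuity_pt_comp (Af G1 G2) exp).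
    apply (cont_of_der _ _ x HA). apply derivable_continuous_pt. apply derivable_pt_exp. }
  assert (dm : forall x, derivable_pt_lim (mf G1 G2) x (- (2 * g1 x + g2 x) * mf G1 G2 x)).
  { intro x. unfold mf. assert (h := exp_pos (Af G1 G2 x)).
    eapply lim_eq. apply (lim_ext (fun s => 1 / exp (Af G1 G2 s))). intro; unfold Rdiv; ring.
    apply (derivable_pt_lim_div (fun _ => 1) (fun s => exp (Af G1 G2 s))). apply Dconst.
    apply (Dcomp exp (Af G1 G2)). apply HA. apply derivable_pt_lim_exp. lra.
    unfold Rsqr. field. lra. }
  assert (dI : forall x, derivable_pt_lim (If g1 G1 G2) x (g1 x * exp (Af G1 G2 x))).
  { intro x. unfold If. apply is_derive_Reals.
    apply (@is_derive_RInt R_CompleteNormedModule (fun s => g1 s * exp (Af G1 G2 s))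
             (fun b => RInt (fun s => g1 s * exp (Af G1 G2 s)) 0 b) 0 x).
    - apply filter_forall. intro b. apply (@RInt_correct R_CompleteNormedModule).
      apply ex_RInt_continuous. intros y _. apply continuity_pt_filterlim. apply Hcf.
    - apply continuity_pt_filterlim. apply Hcf. }
  assert (dz : forall x, derivable_pt_lim (zf g1 G1 G2) x (- (2 * g1 x + g2 x) * zf g1 G1 G2 x + g1 x)).
  { intro x. unfold zf. eapply lim_eq. apply Dmult. apply dm. apply dI.
    unfold mf. assert (h := exp_pos (Af G1 G2 x)). field. lra. }
  assert (deB : forall x, derivable_pt_lim (eBf G2) x (- (g2 x * / 2) * eBf G2 x)).
  { intro x. unfold eBf. eapply lim_eq. apply (Dcomp exp (fun s => - (G2 s * / 2))).
    apply derivable_pt_lim_opp. apply (Dmult G2 (fun _ => / 2)). apply HG2. apply Dconst.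
    apply derivable_pt_lim_exp. cbv beta; ring. }
  assert (deD : forall x, derivable_pt_lim (eDf G1 G2) x (- (2 * g1 x + g2 x * / 2) * eDf G1 G2 x)).
  { intro x. unfold eDf. eapply lim_eq. apply (Dcomp exp (fun s => - (2 * G1 s + G2 s * / 2))).
    apply derivable_pt_lim_opp. apply Dplus. apply (Dmult (fun _ => 2) G1). apply Dconst. apply HG1.
    apply (Dmult G2 (fun _ => / 2)). apply HG2. apply Dconst.
    apply derivable_pt_lim_exp. cbv beta; ring. }
  assert (m0 : mf G1 G2 0 = 1) by (unfold mf; rewrite HA0, exp_0; field).
  assert (z0 : zf g1 G1 G2 0 = 0) by (unfold zf, If; rewrite RInt_point; unfold zero; simpl; ring).
  assert (eB0 : eBf G2 0 = 1) by (unfold eBf; rewrite HG20; replace (- (0 * / 2)) with 0 by ring; apply exp_0).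
  assert (eD0 : eDf G1 G2 0 = 1) by (unfold eDf; rewrite HG10, HG20; replace (- (2 * 0 + 0 * / 2)) with 0 by ring; apply exp_0).
  split.
  - intros a b c d. rewrite Sid_pt. unfold toS. f_equal.
    destruct a,b,c,d; unfold sumtab, dtab, bR; simpl; rewrite ?m0, ?z0, ?eB0, ?eD0; field.
  - intros t a b c d. unfold Cderiv. rewrite L1_fun, L2_fun. split.
    + destruct a,b,c,d; cbv [toS sumtab Lsum Sadd Scomp Bsum Cmul Cadd RtoC Re Im k1 k2 bR Bool.eqb andb negb];
      (eapply lim_eq; [first [ apply Dconst
            | apply dz
            | apply Dplus; [apply dm | apply dz]
            | apply Dminus; [apply Dconst | apply dz]
            | apply Dminus; [apply Dconst | apply Dplus; [apply dm | apply dz]]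
            | apply (Dmult (fun _ => / 2)); [apply Dconst | apply Dplus; [apply deB | apply deD]]
            | apply (Dmult (fun _ => / 2)); [apply Dconst | apply Dminus; [apply deB | apply deD]] ] |]);
      cbv beta; field.
    + destruct a,b,c,d; cbv [toS sumtab Lsum Sadd Scomp Bsum Cmul Cadd RtoC Re Im k1 k2 bR Bool.eqb andb negb];
      (eapply lim_eq; [apply Dconst | ring]).
Qed.

Lemma comp_der g1 g2 Lam : solves (Lsum (L1 g1) (L2 g2)) Lam -> forall t a b c d,
  derivable_pt_lim (fun s => Re (Lam s a b c d)) t
    (S4 (fun e f => (g1 t * k1 a b e f + g2 t * k2 a b e f) * Re (Lam t e f c d))).
Proof. intros [_ HD] t a b c d. eapply lim_eq. apply (proj1 (HD t a b c d)).
  rewrite L1_fun, L2_fun. cbv [Lsum Sadd Scomp Bsum Cmul Cadd RtoC Re Im S4]. ring. Qed.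
Lemma comp0 g1 g2 Lam : solves (Lsum (L1 g1) (L2 g2)) Lam -> forall a b c d,
  Re (Lam 0 a b c d) = dtab a b c d.
Proof. intros [H0 _] a b c d. rewrite H0, Sid_pt. reflexivity. Qed.

Lemma row00 g1 g2 Lam (H : solves (Lsum (L1 g1) (L2 g2)) Lam) c d t :
  derivable_pt_lim (fun s => Re (Lam s false false c d)) t
   (- (g1 t + g2 t) * Re (Lam t false false c d) + g1 t * Re (Lam t true true c d)).
Proof. eapply lim_eq. apply (comp_der _ _ _ H). cbv [S4 k1 k2 bR Bool.eqb andb negb]. ring. Qed.
Lemma row11 g1 g2 Lam (H : solves (Lsum (L1 g1) (L2 g2)) Lam) c d t :
  derivable_pt_lim (fun s => Re (Lam s true true c d)) t
   ((g1 t + g2 t) * Re (Lam t false false c d) - g1 t * Re (Lam t true true c d)).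
Proof. eapply lim_eq. apply (comp_der _ _ _ H). cbv [S4 k1 k2 bR Bool.eqb andb negb]. ring. Qed.
Lemma row01 g1 g2 Lam (H : solves (Lsum (L1 g1) (L2 g2)) Lam) c d t :
  derivable_pt_lim (fun s => Re (Lam s false true c d)) t
   (- g1 t * Re (Lam t false true c d) + g1 t * Re (Lam t true false c d) - / 2 * g2 t * Re (Lam t false true c d)).
Proof. eapply lim_eq. apply (comp_der _ _ _ H). cbv [S4 k1 k2 bR Bool.eqb andb negb]. ring. Qed.
Lemma row10 g1 g2 Lam (H : solves (Lsum (L1 g1) (L2 g2)) Lam) c d t :
  derivable_pt_lim (fun s => Re (Lam s true false c d)) t
   (g1 t * Re (Lam t false true c d) - g1 t * Re (Lam t true false c d) - / 2 * g2 t * Re (Lam t true false c d)).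
Proof. eapply lim_eq. apply (comp_der _ _ _ H). cbv [S4 k1 k2 bR Bool.eqb andb negb]. ring. Qed.

Lemma pop_sum g1 g2 Lam (H : solves (Lsum (L1 g1) (L2 g2)) Lam) c d t :
  Re (Lam t false false c d) + Re (Lam t true true c d) = dtab false false c d + dtab true true c d.
Proof. rewrite <- (comp0 _ _ _ H), <- (comp0 _ _ _ H).
  apply (const_lim (fun s => Re (Lam s false false c d) + Re (Lam s true true c d))).
  intro x. eapply lim_eq. apply Dplus. apply (row00 _ _ _ H). apply (row11 _ _ _ H). ring. Qed.

Lemma expsol (f a Af : R -> R) : (forall t, derivable_pt_lim f t (- a t * f t)) ->
  (forall t, derivable_pt_lim Af t (a t)) -> forall t, f t * exp (Af t) = f 0 * exp (Af 0).
Proof. intros Hf HA. apply (const_lim (fun t => f t * exp (Af t))). intro x.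
  eapply lim_eq. apply Dmult. apply Hf. apply (Dcomp exp Af). apply HA. apply derivable_pt_lim_exp. cbv beta; ring. Qed.

Lemma PI_gt3 : 3 < PI.
Proof. generalize PI2_3_2. lra. Qed.

Ltac cvb := cbv [L1 L2 Lsum sop_of Mscale Msub Madd Mmul Mdag Mtr Bsum Eunit sx sy sz splus sminus acomm comm Cmul Cadd Csub Copp Cconj RtoC C0 C1 Ci Scomp Sid Sadd apply Mid Mzero Bool.eqb andb negb Csum]; cbn [Re Im].

Lemma psd1 : blockPSD 1 (fun _ _ => Eunit false false).
Proof. intro v. cbv zeta. cvb. split. ring.
  match goal with |- 0 <= ?e => replace e with ((Re (v 0%nat false))^2 + (Im (v 0%nat false))^2) by ring end.
  apply Rplus_le_le_0_compat; apply pow2_ge_0. Qed.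

Lemma notCP_of_neg (S : Sop) : Re (S false false false false) < 0 -> ~ CP S.
Proof. intros Hn HCP. destruct (HCP 1%nat _ psd1 (fun _ a => if a then C0 else C1)) as [_ Hr].
  cbv zeta in Hr. cvb. revert Hr. cvb.
  match goal with |- 0 <= ?e -> _ => replace e with (Re (S false false false false)) by ring end. lra. Qed.

Lemma notCP_a Lam : solves (Lsum (L1 (fun t => sin (2 * t))) (L2 (fun _ => 1))) Lam -> ~ CP (Lam PI).
Proof.
  intro H. apply notCP_of_neg.
  set (P := fun s => Re (Lam s false false false false)).
  assert (Hs : forall s, Re (Lam s true true false false) = 1 - P s).
  { intro s. generalize (pop_sum _ _ _ H false false s). unfold P, dtab, bR. simpl. lra. }
  assert (dP : forall x, derivable_pt_lim P x (- (2 * sin (2 * x) + 1) * P x + sin (2 * x))).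
  { intro x. eapply lim_eq. apply (row00 _ _ _ H). rewrite Hs. fold (P x). ring. }
  set (E := fun x => exp (x + 1 - cos (2 * x))).
  assert (dE : forall x, derivable_pt_lim E x (E x * (1 + 2 * sin (2 * x)))).
  { intro x. unfold E. apply is_derive_Reals. auto_derive. auto. unfold Rminus. ring. }
  set (Gf := fun x => 2 * exp x - exp x * (cos (2 * x) + 2 * sin (2 * x)) * / 5).
  assert (dG : forall x, derivable_pt_lim Gf x (exp x * (2 - cos (2 * x)))).
  { intro x. unfold Gf. apply is_derive_Reals. auto_derive. auto. field. }
  set (h := fun x => P x * E x - / 2 * E x + / 2 * Gf x).
  assert (dh : forall x, derivable_pt_lim h x (- / 2 * E x + / 2 * (exp x * (2 - cos (2 * x))))).
  { intro x. unfold h. eapply lim_eq.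
    apply Dplus. apply Dminus. apply Dmult. apply dP. apply dE. apply (Dmult (fun _ => / 2) E). apply Dconst. apply dE.
    apply (Dmult (fun _ => / 2) Gf). apply Dconst. apply dG. cbv beta. field. }
  assert (Hle : h PI <= h 0).
  { apply (decr_lim h _ 0 PI dh). 2: generalize PI_RGT_0; lra.
    intros x _. unfold E. replace (x + 1 - cos (2 * x)) with (x + (1 - cos (2 * x))) by ring.
    rewrite exp_plus. assert (h1 := exp_ineq1_le (1 - cos (2 * x))). assert (h2 := exp_pos x).
    assert (exp x * (1 + (1 - cos (2 * x))) <= exp x * exp (1 - cos (2 * x))) by (apply Rmult_le_compat_l; lra).
    lra. }
  assert (P0 : P 0 = 1) by (unfold P; rewrite (comp0 _ _ _ H); reflexivity).
  unfold h, Gf, E in Hle. rewrite P0 in Hle.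
  replace (2 * PI) with (2 * PI) in Hle by reflexivity.
  rewrite cos_2PI, sin_2PI in Hle. replace (2 * 0) with 0 in Hle by ring. rewrite cos_0, sin_0, exp_0 in Hle.
  replace (0 + 1 - 1) with 0 in Hle by ring. replace (PI + 1 - 1) with PI in Hle by ring. rewrite exp_0 in Hle.
  assert (he : 4 < exp PI) by (generalize (exp_ineq1 PI) PI_gt3; intros; assert (PI <> 0) by lra; intuition lra).
  fold (P PI). assert (P PI * exp PI < 0) by lra.
  destruct (Rlt_or_le (P PI) 0) as [h0|h0]; auto. assert (0 <= P PI * exp PI) by (apply Rmult_le_pos; lra). lra.
Qed.

Ltac cv2 := cbv [L1 L2 Lsum sop_of Mscale Msub Madd Mmul Mdag Mtr Bsum Eunit sx sy sz splus sminus acomm comm Cmul Cadd Csub Copp Cconj RtoC C0 C1 Ci Scomp Sid Sadd apply Mid Mzero Bool.eqb andb negb Csum Nat.eqb]; cbn [Re Im].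

Definition Xch (i j : nat) : M2 := Eunit (Nat.eqb i 1) (Nat.eqb j 1).
Lemma psd2 : blockPSD 2 Xch.
Proof. intro v. cbv zeta. unfold Xch. cv2. split. ring.
  match goal with |- 0 <= ?e => replace e with ((Re (v 0%nat false) + Re (v 1%nat true))^2 + (Im (v 0%nat false) + Im (v 1%nat true))^2) by ring end.
  apply Rplus_le_le_0_compat; apply pow2_ge_0. Qed.

Lemma choi_form (S : Sop) (y : R) :
  let v := fun (i : nat) (a : bool) => if Nat.eqb i 1 then (if a then RtoC y else C0) else (if a then C0 else C1) in
  Re (Csum 2 (fun i => Csum 2 (fun j => Bsum (fun a => Bsum (fun b =>
       Cmul (Cconj (v i a)) (Cmul (apply S (Xch i j) a b) (v j b))))))) =
  Re (S false false false false) + y * Re (S false true false true) + y * Re (S true false true false)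
   + y * y * Re (S true true true true).
Proof. cbv zeta. unfold Xch. cv2. ring. Qed.

Lemma cos_lt1 x : 0 < x < 2 * PI -> cos x < 1.
Proof. intro hx. replace x with (2 * (x / 2)) by field. rewrite cos_2a_sin.
  assert (0 < sin (x / 2)) by (apply sin_gt_0; lra). nra. Qed.

Lemma notCP_b Lam : solves (Lsum (L1 (fun _ => / 2)) (L2 (fun t => sin t))) Lam -> ~ CP (Lam (2 * PI)).
Proof.
  intro H.
  set (P := fun s => Re (Lam s false false false false)).
  set (Z := fun s => Re (Lam s false false true true)).
  set (W := fun s => Re (Lam s true true true true)).
  set (X1 := fun s => Re (Lam s false true false true)).
  set (Y1 := fun s => Re (Lam s true false false true)).
  set (X2 := fun s => Re (Lam s false true true false)).
  set (Y2 := fun s => Re (Lam s true false true false)).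
  assert (HQ : forall s, Re (Lam s true true false false) = 1 - P s).
  { intro s. generalize (pop_sum _ _ _ H false false s). unfold P, dtab, bR. simpl. lra. }
  assert (HW : forall s, W s = 1 - Z s).
  { intro s. generalize (pop_sum _ _ _ H true true s). unfold W, Z, dtab, bR. simpl. lra. }
  assert (I0 : forall a b c d, Re (Lam 0 a b c d) = dtab a b c d) by apply (comp0 _ _ _ H).
  assert (dP : forall x, derivable_pt_lim P x (- (1 + sin x) * P x + / 2)).
  { intro x. eapply lim_eq. apply (row00 _ _ _ H). rewrite HQ. fold (P x). field. }
  assert (dZ : forall x, derivable_pt_lim Z x (- (1 + sin x) * Z x + / 2)).
  { intro x. eapply lim_eq. apply (row00 _ _ _ H). fold (Z x). fold (W x). rewrite HW. field. }
  assert (HM : forall t, (P t - Z t) * exp (t + 1 - cos t) = (P 0 - Z 0) * exp (0 + 1 - cos 0)).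
  { apply (expsol (fun t => P t - Z t) (fun t => 1 + sin t)).
    intro x. eapply lim_eq. apply Dminus. apply dP. apply dZ. cbv beta; ring.
    intro x. apply is_derive_Reals. auto_derive. auto. ring. }
  assert (P0 : P 0 = 1) by (unfold P; rewrite I0; reflexivity).
  assert (Z0 : Z 0 = 0) by (unfold Z; rewrite I0; reflexivity).
  set (E2 := exp (2 * PI)).
  assert (hE2 : 1 < E2) by (unfold E2; rewrite <- exp_0; apply exp_increasing; generalize PI_RGT_0; lra).
  assert (HM2 : (P (2 * PI) - Z (2 * PI)) * E2 = 1).
  { assert (HM' := HM (2 * PI)). rewrite P0, Z0, cos_0, cos_2PI in HM'.
    replace (0 + 1 - 1) with 0 in HM' by ring. replace (2 * PI + 1 - 1) with (2 * PI) in HM' by ring.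
    rewrite exp_0 in HM'. fold E2 in HM'. lra. }
  set (h := fun x => Z x * exp (x + 1 - cos x) - / 2 * exp x).
  assert (dh : forall x, derivable_pt_lim h x (/ 2 * exp (x + 1 - cos x) - / 2 * exp x)).
  { intro x. unfold h. eapply lim_eq. apply Dminus. apply Dmult. apply dZ.
    apply (Dcomp exp (fun x => x + 1 - cos x)).
    apply is_derive_Reals; auto_derive; auto; reflexivity. apply derivable_pt_lim_exp.
    apply (Dmult (fun _ => / 2) exp). apply Dconst. apply derivable_pt_lim_exp.
    cbv beta. ring. }
  assert (Hh : h 0 < h (2 * PI)).
  { apply (incr_strict h _ 0 (2 * PI) dh). 2: generalize PI_RGT_0; lra.
    intros x hx. replace (x + 1 - cos x) with (x + (1 - cos x)) by ring. rewrite exp_plus.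
    assert (cos x < 1) by (apply cos_lt1; lra).
    assert (exp 0 < exp (1 - cos x)) by (apply exp_increasing; lra). rewrite exp_0 in *.
    assert (h2 := exp_pos x).
    assert (exp x * 1 < exp x * exp (1 - cos x)) by (apply Rmult_lt_compat_l; lra). lra. }
  unfold h in Hh. rewrite Z0, cos_0, cos_2PI, exp_0 in Hh.
  replace (2 * PI + 1 - 1) with (2 * PI) in Hh by ring. fold E2 in Hh.
  assert (HS1 : forall t, (X1 t + Y1 t) * exp (/ 2 * (1 - cos t)) = (X1 0 + Y1 0) * exp (/ 2 * (1 - cos 0))).
  { apply (expsol (fun t => X1 t + Y1 t) (fun t => / 2 * sin t)).
    intro x. eapply lim_eq. apply Dplus. apply (row01 _ _ _ H). apply (row10 _ _ _ H). unfold X1, Y1. ring.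
    intro x. apply is_derive_Reals. auto_derive. auto. ring. }
  assert (HD1 : forall t, (X1 t - Y1 t) * exp (t + / 2 * (1 - cos t)) = (X1 0 - Y1 0) * exp (0 + / 2 * (1 - cos 0))).
  { apply (expsol (fun t => X1 t - Y1 t) (fun t => 1 + / 2 * sin t)).
    intro x. eapply lim_eq. apply Dminus. apply (row01 _ _ _ H). apply (row10 _ _ _ H). unfold X1, Y1. field.
    intro x. apply is_derive_Reals. auto_derive. auto. ring. }
  assert (HS2 : forall t, (X2 t + Y2 t) * exp (/ 2 * (1 - cos t)) = (X2 0 + Y2 0) * exp (/ 2 * (1 - cos 0))).
  { apply (expsol (fun t => X2 t + Y2 t) (fun t => / 2 * sin t)).
    intro x. eapply lim_eq. apply Dplus. apply (row01 _ _ _ H). apply (row10 _ _ _ H). unfold X2, Y2. ring.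
    intro x. apply is_derive_Reals. auto_derive. auto. ring. }
  assert (HD2 : forall t, (Y2 t - X2 t) * exp (t + / 2 * (1 - cos t)) = (Y2 0 - X2 0) * exp (0 + / 2 * (1 - cos 0))).
  { apply (expsol (fun t => Y2 t - X2 t) (fun t => 1 + / 2 * sin t)).
    intro x. eapply lim_eq. apply Dminus. apply (row10 _ _ _ H). apply (row01 _ _ _ H). unfold X2, Y2. field.
    intro x. apply is_derive_Reals. auto_derive. auto. ring. }
  assert (Hc0 : / 2 * (1 - cos 0) = 0) by (rewrite cos_0; ring).
  assert (Hc2 : / 2 * (1 - cos (2 * PI)) = 0) by (rewrite cos_2PI; ring).
  specialize (HS1 (2 * PI)). specialize (HD1 (2 * PI)). specialize (HS2 (2 * PI)). specialize (HD2 (2 * PI)).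
  rewrite Hc0, Hc2 in HS1, HS2. rewrite Hc0, Hc2 in HD1, HD2.
  replace (2 * PI + 0) with (2 * PI) in HD1, HD2 by ring. replace (0 + 0) with 0 in HD1, HD2 by ring.
  fold E2 in HD1, HD2. rewrite exp_0 in HS1, HS2, HD1, HD2.
  assert (X10 : X1 0 = 1) by (unfold X1; rewrite I0; reflexivity).
  assert (Y10 : Y1 0 = 0) by (unfold Y1; rewrite I0; reflexivity).
  assert (X20 : X2 0 = 0) by (unfold X2; rewrite I0; reflexivity).
  assert (Y20 : Y2 0 = 1) by (unfold Y2; rewrite I0; reflexivity).
  rewrite X10, Y10 in HS1, HD1. rewrite X20, Y20 in HS2, HD2.
  set (p := P (2 * PI)). set (r := W (2 * PI)). set (y := -1 + (r - p) / 2).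
  intro HCP. destruct (HCP 2%nat Xch psd2
      (fun (i : nat) (a : bool) => if Nat.eqb i 1 then (if a then RtoC y else C0) else (if a then C0 else C1))) as [_ Hr].
  cbv zeta in Hr. rewrite choi_form in Hr.
  fold (P (2 * PI)) (X1 (2 * PI)) (Y2 (2 * PI)) (W (2 * PI)) in Hr. fold p r in Hr.
  assert (hr : r = 1 - Z (2 * PI)) by (unfold r; apply HW).
  set (e := / E2) in *.
  assert (he : 0 < e < 1). { unfold e. split. apply Rinv_0_lt_compat; lra.
    rewrite <- Rinv_1. apply Rinv_lt_contravar; lra. }
  assert (hp : p = Z (2 * PI) + e). { unfold e. apply (Rmult_eq_reg_r E2). unfold p. rewrite Rmult_plus_distr_r, Rinv_l by lra. lra. lra. }
  assert (hx1 : X1 (2 * PI) = / 2 * (1 + e)). { unfold e. apply (Rmult_eq_reg_r E2).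
    rewrite Rmult_assoc, Rmult_plus_distr_r, Rinv_l, Rmult_1_l by lra. nra. lra. }
  assert (hy2 : Y2 (2 * PI) = / 2 * (1 + e)). { unfold e. apply (Rmult_eq_reg_r E2).
    rewrite Rmult_assoc, Rmult_plus_distr_r, Rinv_l, Rmult_1_l by lra. nra. lra. }
  assert (hz : (1 - e) / 2 < Z (2 * PI)).
  { assert (Z (2 * PI) * E2 * e > / 2 * (E2 - 1) * e) by (apply Rmult_gt_compat_r; lra).
    unfold e in H0. rewrite Rmult_assoc, Rinv_r in H0 by lra. fold e in H0.
    replace (/ 2 * (E2 - 1) * e) with (/ 2 * (E2 * e) - / 2 * e) in H0 by ring.
    unfold e in H0. rewrite Rinv_r in H0 by lra. fold e in H0. lra. }
  rewrite hx1, hy2 in Hr.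
  assert (Hq : p + y * (/ 2 * (1 + e)) + y * (/ 2 * (1 + e)) + y * y * r = (r - p) * (r - p) * (r - 2) / 4).
  { unfold y. rewrite hp, hr. field. }
  rewrite Hq in Hr.
  assert (r - p < 0) by lra. assert (r - 2 < 0) by lra.
  assert (0 < (r - p) * (r - p)) by nra.
  assert ((r - p) * (r - p) * (r - 2) < 0) by nra. lra.
Qed.

Theorem mainTheorem3 :
  (* (a) gamma_1(t) = sin(2t), gamma_2(t) = 1 *)
  (SSC_CPTP (L1 (fun t => sin (2 * t))) /\
   SSC_CPTP (L2 (fun _ => 1)) /\
   (exists Lam, solves (Lsum (L1 (fun t => sin (2 * t))) (L2 (fun _ => 1))) Lam) /\
   (forall Lam, solves (Lsum (L1 (fun t => sin (2 * t))) (L2 (fun _ => 1))) Lam ->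
      ~ CP (Lam PI))) /\
  (* (b) gamma_1(t) = 1/2, gamma_2(t) = sin t *)
  (SSC_CPTP (L1 (fun _ => / 2)) /\
   SSC_CPTP (L2 (fun t => sin t)) /\
   (exists Lam, solves (Lsum (L1 (fun _ => / 2)) (L2 (fun t => sin t))) Lam) /\
   (forall Lam, solves (Lsum (L1 (fun _ => / 2)) (L2 (fun t => sin t))) Lam ->
      ~ CP (Lam (2 * PI)))).
Proof.
  assert (dGa1 : forall x, derivable_pt_lim (fun t => / 2 * (1 - cos (2 * t))) x (sin (2 * x))).
  { intro x. apply is_derive_Reals. auto_derive. auto. field. }
  assert (dGa2 : forall x, derivable_pt_lim (fun t => t) x 1).
  { intro x. apply derivable_pt_lim_id. }
  assert (dGb1 : forall x, derivable_pt_lim (fun t => / 2 * t) x (/ 2)).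
  { intro x. apply is_derive_Reals. auto_derive. auto. ring. }
  assert (dGb2 : forall x, derivable_pt_lim (fun t => 1 - cos t) x (sin x)).
  { intro x. apply is_derive_Reals. auto_derive. auto. ring. }
  assert (ca1 : forall x, continuity_pt (fun t => sin (2 * t)) x).
  { intro x. apply (cont_of_der _ (fun t => 2 * cos (2 * t))). intro y.
    apply is_derive_Reals. auto_derive. auto. ring. }
  assert (cconst : forall (c x : R), continuity_pt (fun _ => c) x).
  { intros c x. apply continuity_pt_const. intros u v; reflexivity. }
  assert (cb2 : forall x, continuity_pt (fun t => sin t) x).
  { intro x. apply (cont_of_der _ cos). intro y. apply derivable_pt_lim_sin. }
  assert (c0 : cos 0 = 1) by apply cos_0.
  split; [split; [|split; [|split]] | split; [|split; [|split]]].
  - apply (SSC_CPTP_1 _ (fun t => / 2 * (1 - cos (2 * t)))); auto.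
    replace (2 * 0) with 0 by ring. rewrite c0. ring.
    intros t _. assert (h := COS_bound (2 * t)). lra.
  - apply (SSC_CPTP_2 _ (fun t => t)); auto.
  - eexists. apply (sum_exist _ _ (fun t => / 2 * (1 - cos (2 * t))) (fun t => t)); auto.
    replace (2 * 0) with 0 by ring. rewrite c0. ring.
  - apply notCP_a.
  - apply (SSC_CPTP_1 _ (fun t => / 2 * t)); auto. ring.
    intros t ht. lra.
  - apply (SSC_CPTP_2 _ (fun t => 1 - cos t)); auto. rewrite c0; ring.
    intros t _. assert (h := COS_bound t). lra.
  - eexists. apply (sum_exist _ _ (fun t => / 2 * t) (fun t => 1 - cos t)); auto.
    ring. rewrite c0; ring.
  - apply notCP_b.
Qed.
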